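(* For every $\alpha\in[\tfrac12,1)$ there is a sequence of instances $(\mathcal{T}_n,w_n)$ (finite trees with $w_n:V(\mathcal{T}_n)\to\mathbb{R}_{\ge0}$) with $w_n(\mathcal{T}_n)=1$ and $\lim_{n\to\infty}\mathtt{OPT}(\mathcal{T}_n,w_n)=\infty$, such that $$\mathtt{cent}^\alpha(\mathcal{T}_n,w_n)\ge\frac{1}{1-\alpha}\mathtt{OPT}(\mathcal{T}_n,w_n)-\frac{\alpha}{1-\alpha}.$$
   Context: For a subgraph $\mathcal{H}$ of $\mathcal{T}$, $w(\mathcal{H})=\sum_{x\in V(\mathcal{H})}w(x)$. A search tree on a tree $\mathcal{T}$ is a rooted tree $T$ with vertex set $V(\mathcal{T})$ defined recursively: its root is an arbitrary vertex $r$, and the children of $r$ are the roots of search trees built on the connected components of $\mathcal{T}-r$; a single-vertex tree has only itself as search tree. $\mathtt{cost}_w(T)=\sum_x w(x)\,\mathtt{depth}_T(x)$ with root depth $1$; $\mathtt{OPT}(\mathcal{T},w)$ is the minimum cost over all search trees on $\mathcal{T}$. For $0\le\alpha\le1$, a vertex $v$ is an $\alpha$-centroid of $(\mathcal{T},w)$ if every component $\mathcal{H}$ of $\mathcal{T}-v$ has $w(\mathcal{H})\le\alpha\, w(\mathcal{T})$. A search tree $T$ is an $\alpha$-centroid tree if every vertex $x$ is an $\alpha$-centroid of $(\mathcal{T}[V(T_x)],w)$, where $T_x$ is the subtree of $T$ rooted at $x$. $\mathtt{cent}^\alpha(\mathcal{T},w)$ is the maximum cost of an $\alpha$-centroid tree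 of $(\mathcal{T},w)$, or $0$ if none exists. *)

(* Defs.v *)
From mathcomp Require Import all_boot all_order all_algebra.
From mathcomp Require Import boolp reals.
Set Implicit Arguments. Unset Strict Implicit. Unset Printing Implicit Defensive.
Import Order.TTheory GRing.Theory Num.Theory.
Local Open Scope ring_scope.

Section Trees.
Variable T : finType.

(** A finite tree: a simple graph (symmetric, irreflexive edge relation)
    that is connected and has exactly #|V|-1 edges (i.e. is acyclic).
    Edges are counted as ordered pairs, hence the factor 2. *)
Definition is_tree (e : rel T) : Prop :=
  [/\ symmetric e, irreflexive e, (0 < #|T|)%N,
      (forall x y, connect e x y) &
      #|[set p : T * T | e p.1 p.2]| = (2 * (#|T| - 1))%N].

Definition induced (e : rel T) (A : {set T}) : rel T :=
  [rel x y | [&& x \in A, y \in A & e x y]].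

Definition comp (e : rel T) (A : {set T}) (x : T) : {set T} :=
  [set y in A | connect (induced e A) x y].

Definition comps (e : rel T) (A : {set T}) : {set {set T}} :=
  [set comp e A x | x in A].

Inductive rtree := Node of T & seq rtree.

Definition root (t : rtree) : T := let: Node r _ := t in r.

Fixpoint vset (t : rtree) : {set T} :=
  let: Node r cs := t in r |: foldr (fun c acc => vset c :|: acc) set0 cs.

(** Recursive search-tree condition: the children of the root r are roots
    of search trees built on the connected components of (vertex set) - r,
    one child per component. *)
Fixpoint valid_st (e : rel T) (t : rtree) : bool :=
  let: Node r cs := t in
  perm_eq [seq vset c | c <- cs] (enum (comps e (vset t :\ r)))
  && all (valid_st e) cs.

Definition search_tree (e : rel T) (t : rtree) : bool :=
  valid_st e t && (vset t == [set: T]).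

Variable R : realType.

Definition wsum (w : T -> R) (A : {set T}) : R := \sum_(x in A) w x.

(** sum_x w(x) * depth(x), root at depth d. *)
Fixpoint costd (w : T -> R) (d : nat) (t : rtree) : R :=
  let: Node r cs := t in
  w r * d%:R + foldr (fun c acc => costd w d.+1 c + acc) 0 cs.

Definition cost (w : T -> R) (t : rtree) : R := costd w 1 t.

Definition is_centroid (e : rel T) (w : T -> R) (alpha : R)
    (S : {set T}) (v : T) : bool :=
  [forall H in comps e (S :\ v), wsum w H <= alpha * wsum w S].

Fixpoint centroid_nodes (e : rel T) (w : T -> R) (alpha : R) (t : rtree)
    : bool :=
  let: Node r cs := t in
  is_centroid e w alpha (vset t) r && all (centroid_nodes e w alpha) cs.

Definition centroid_tree (e : rel T) (w : T -> R) (alpha : R) (t : rtree)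
    : bool :=
  search_tree e t && centroid_nodes e w alpha t.

(** OPT(T, w): minimum cost over all search trees (the set is finite and
    nonempty, so the infimum is a minimum). *)
Definition OPT (e : rel T) (w : T -> R) : R :=
  inf (fun c : R => exists t, search_tree e t /\ c = cost w t).

Definition cent (e : rel T) (w : T -> R) (alpha : R) : R :=
  if `[< exists t, centroid_tree e w alpha t >] then
    sup (fun c : R => exists t, centroid_tree e w alpha t /\ c = cost w t)
  else 0.

End Trees.

(* Main.v *)
Require Import Defs.
From mathcomp Require Import all_boot all_order all_algebra.
From mathcomp Require Import boolp reals.
From mathcomp Require Import ring lra zify.
Set Implicit Arguments. Unset Strict Implicit. Unset Printing Implicit Defensive.
Import Order.TTheory GRing.Theory Num.Theory.
Local Open Scope ring_scope.

Section Graph.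

Lemma connect_map (T T' : finType) (g : T -> T') (r : rel T) (r' : rel T') :
  (forall x y, r x y -> r' (g x) (g y)) ->
  forall x y, connect r x y -> connect r' (g x) (g y).
Proof.
move=> H x y /connectP [p pth ->]; apply/connectP; exists (map g p); last by rewrite last_map.
by elim: p x pth => //= z p IH x /andP [rxz pth]; rewrite H //=; exact: IH.
Qed.

Variable T : finType.
Implicit Types (e : rel T) (A : {set T}).

Lemma comp_sub e A x : Defs.comp e A x \subset A.
Proof. by apply/subsetP=> y; rewrite inE => /andP []. Qed.

Lemma comp_mem e A x : x \in A -> x \in Defs.comp e A x.
Proof. by move=> xA; rewrite inE xA connect0. Qed.

Lemma mem_comps e A x : x \in A -> Defs.comp e A x \in comps e A.
Proof. by move=> xA; apply/imsetP; exists x. Qed.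

Lemma comps0 e : comps e set0 = set0.
Proof. by rewrite /comps imset0. Qed.

Lemma connect_induced_mem e A x y : x \in A -> connect (induced e A) x y -> y \in A.
Proof.
move=> xA /connectP [p pth ->]; elim: p x xA pth => //= z p IH x xA /andP [/andP [_ /andP [zA _]] pth].
exact: IH pth.
Qed.

Lemma comps_split e A1 A2 :
  (forall x y, x \in A1 -> y \in A2 -> e x y = false) ->
  (forall x y, x \in A2 -> y \in A1 -> e x y = false) ->
  comps e (A1 :|: A2) = comps e A1 :|: comps e A2.
Proof.
move=> H12 H21.
have key : forall B1 B2 : {set T}, (forall x y, x \in B1 -> y \in B2 -> e x y = false) ->
   forall x, x \in B1 -> Defs.comp e (B1 :|: B2) x = Defs.comp e B1 x.
  move=> B1 B2 H x xB1; apply/setP => y; rewrite !inE.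
  apply/idP/idP.
    move=> /andP [_ /connectP [p pth ->]].
    have: path (induced e B1) x p.
      elim: p x xB1 pth => //= z p IH x xB1 /andP [/andP [_ /andP [zB ez]] pth].
      have zB1 : z \in B1.
        move: zB; rewrite inE => /orP [//|zB2]; by rewrite H in ez.
      by rewrite /= {1}/induced /= xB1 zB1 ez /=; exact: IH.
    move=> pth1; have cn : connect (induced e B1) x (last x p) by apply/connectP; exists p.
    by rewrite cn (connect_induced_mem xB1 cn).
  move=> /andP [yB1 cn]; rewrite yB1 /=.
  idtac.
  apply: (connect_map (g := id) _ cn) => u v /= /andP [uB /andP [vB euv]].
  by rewrite /induced /= !inE uB vB euv.
rewrite /comps imsetU; congr (_ :|: _); apply: eq_in_imset => x xA.
  exact: key.
by rewrite setUC; apply: key => // u v uA vA; apply: H21.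
Qed.

Lemma comps_conn e A x0 :
  (forall x y, x \in A -> y \in A -> connect (induced e A) x y) -> x0 \in A ->
  comps e A = [set A].
Proof.
move=> H x0A; apply/setP => B; rewrite inE; apply/imsetP/eqP.
  move=> [x xA ->]; apply/setP => y; rewrite inE.
  by case yA : (y \in A) => //=; rewrite H.
move=> ->; exists x0 => //; apply/setP => y; rewrite inE.
by case yA : (y \in A) => //=; rewrite H.
Qed.

Lemma cover_comps e A : cover (comps e A) = A.
Proof.
apply/setP => x; apply/bigcupP/idP.
  by move=> [B /imsetP [y yA ->]]; apply/subsetP/comp_sub.
by move=> xA; exists (Defs.comp e A x); [exact: mem_comps | exact: comp_mem].
Qed.

End Graph.

Section Embed.
Variables (T T' : finType) (f : T -> T') (e : rel T) (e' : rel T').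
Hypothesis finj : injective f.
Hypothesis fe : forall x y, e' (f x) (f y) = e x y.

Lemma connect_embed (A : {set T}) x y :
  connect (induced e' (f @: A)) (f x) (f y) = connect (induced e A) x y.
Proof.
apply/idP/idP; last first.
  apply: connect_map => u v /= /andP [uA /andP [vA euv]].
  by rewrite /induced /= !imset_f // fe euv.
pose g y' := odflt x [pick a | f a == y'].
have gf a : g (f a) = a.
  rewrite /g; case: pickP => [b /eqP /finj -> //|/(_ a)]; by rewrite eqxx.
move/(connect_map (g := g) (r' := induced e A)); rewrite !gf; apply.
move=> u v /= /andP [/imsetP [a aA ->] /andP [/imsetP [b bA ->] eab]].
by rewrite /induced /= !gf aA bA -fe.
Qed.

Lemma comp_embed (A : {set T}) x : Defs.comp e' (f @: A) (f x) = f @: Defs.comp e A x.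
Proof.
apply/setP => y'; rewrite inE; apply/andP/imsetP.
  move=> [/imsetP [y yA ->] cn]; exists y => //; rewrite inE yA.
  by rewrite -connect_embed.
move=> [y]; rewrite inE => /andP [yA cn] ->; split; first exact: imset_f.
by rewrite connect_embed.
Qed.

Lemma comps_embed (A : {set T}) : comps e' (f @: A) = (fun H : {set T} => f @: H) @: comps e A.
Proof.
rewrite /comps -imset_comp -imset_comp; apply: eq_in_imset => x xA /=.
exact: comp_embed.
Qed.

End Embed.

Fixpoint LIn (A : Type) (a : A) (l : seq A) : Prop :=
  if l is b :: l' then b = a \/ LIn a l' else False.

Section RT.
Variable T : finType.

Definition rtree_ind' (P : rtree T -> Prop)
  (H : forall r cs, (forall c, LIn c cs -> P c) -> P (Node r cs)) :
  forall t, P t :=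
  fix IH t := match t with
  | Node r cs => H r cs
      ((fix aux (l : seq (rtree T)) : forall c, LIn c l -> P c :=
         match l return forall c, LIn c l -> P c with
         | [::] => fun c F => match F with end
         | c0 :: l' => fun c Hin =>
             match Hin with
             | or_introl E => eq_ind c0 P (IH c0) c E
             | or_intror Hin' => aux l' c Hin'
             end
         end) cs)
  end.

Lemma vsetE r (cs : seq (rtree T)) : vset (Node r cs) = r |: \bigcup_(c <- cs) vset c.
Proof. by rewrite /=; congr (_ |: _); elim: cs => [|c cs IH] /=; rewrite ?big_nil ?big_cons ?IH. Qed.

Lemma in_map_vset (cs : seq (rtree T)) H :
  H \in [seq vset c | c <- cs] -> exists c, LIn c cs /\ H = vset c.
Proof.
elim: cs => //= c cs IH; rewrite in_cons => /orP [/eqP ->|/IH [c' [? ?]]].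
  by exists c; split; [left|].
by exists c'; split; [right|].
Qed.

Lemma valid_child (e : rel T) r cs c : valid_st e (Node r cs) -> LIn c cs -> valid_st e c.
Proof.
move=> /= /andP [_]; elim: cs => //= c0 cs IH /andP [v0 vs] [<-|] //; exact: IH.
Qed.

Lemma child_comp (e : rel T) r cs c : valid_st e (Node r cs) -> LIn c cs ->
  vset c \in comps e (vset (Node r cs) :\ r).
Proof.
move=> /= /andP [pe _] cin; rewrite -mem_enum -(perm_mem pe).
by elim: cs cin {pe} => //= c0 cs IH [<-|/IH]; rewrite in_cons ?eqxx // => ->; rewrite orbT.
Qed.

Lemma vset_perm r cs (X : {set {set T}}) :
  perm_eq [seq vset c | c <- cs] (enum X) -> vset (Node r cs) = r |: cover X.
Proof.
move=> pe; rewrite vsetE; congr (_ |: _).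
by rewrite -(big_map (@vset T) xpredT id) (perm_big _ pe) big_enum.
Qed.

Variable R : realType.
Implicit Types (w : T -> R) (t : rtree T).

Fixpoint nsum (w : T -> R) (t : rtree T) : R :=
  let: Node r cs := t in w r + foldr (fun c acc => nsum w c + acc) 0 cs.

Lemma costdE w d r cs : costd w d (Node r cs) = w r * d%:R + \sum_(c <- cs) costd w d.+1 c.
Proof. by rewrite /=; congr (_ + _); elim: cs => [|c cs IH] /=; rewrite ?big_nil ?big_cons ?IH. Qed.

Lemma nsumE w r cs : nsum w (Node r cs) = w r + \sum_(c <- cs) nsum w c.
Proof. by rewrite /=; congr (_ + _); elim: cs => [|c cs IH] /=; rewrite ?big_nil ?big_cons ?IH. Qed.

Lemma costdS w d t : costd w d.+1 t = costd w d t + nsum w t.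
Proof.
elim/rtree_ind': t d => r cs IH d; rewrite !costdE nsumE.
have -> : \sum_(c <- cs) costd w d.+2 c = \sum_(c <- cs) costd w d.+1 c + \sum_(c <- cs) nsum w c.
  rewrite -big_split /=; elim: cs IH => [|c cs IHc] IH; rewrite ?big_nil ?big_cons ?addr0 //.
  by rewrite IH; [rewrite IHc // => c' H; apply: IH; right | left].
by rewrite -natr1 mulrDr mulr1; ring.
Qed.

Lemma costd_ge0 w d t : (forall x, 0 <= w x) -> 0 <= costd w d t.
Proof.
move=> w0; elim/rtree_ind': t d => r cs IH d; rewrite costdE addr_ge0 ?mulr_ge0 //.
elim: cs IH => [|c cs IHc] IH; rewrite ?big_nil ?big_cons // addr_ge0 //.
  by apply: IH; left.
by apply: IHc => c' H; apply: IH; right.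
Qed.

Lemma costd_child w d r cs c : (forall x, 0 <= w x) -> LIn c cs ->
  costd w d.+1 c <= costd w d (Node r cs).
Proof.
move=> w0 cin; rewrite costdE -[X in X <= _]add0r lerD ?mulr_ge0 //.
elim: cs cin => //= c0 cs IH [<-|cin]; rewrite big_cons.
  by rewrite -[X in X <= _]addr0 lerD // sumr_ge0 // => ? _; apply: costd_ge0.
by rewrite -[X in X <= _]add0r lerD ?costd_ge0 // IH.
Qed.

Lemma costd_lin (u v : T -> R) a b d t :
  costd (fun x => a * u x + b * v x) d t = a * costd u d t + b * costd v d t.
Proof.
elim/rtree_ind': t d => r cs IH d; rewrite !costdE.
have -> : \sum_(c <- cs) costd (fun x => a * u x + b * v x) d.+1 c =
   a * \sum_(c <- cs) costd u d.+1 c + b * \sum_(c <- cs) costd v d.+1 c.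
  elim: cs IH => [|c cs IHc] IH; rewrite ?big_nil ?big_cons ?mulr0 ?addr0 //.
  rewrite IH; last by left.
  by rewrite IHc; [ring | move=> c' H; apply: IH; right].
ring.
Qed.

Lemma costd_cat1 w d r cs c :
  costd w d (Node r (cs ++ [:: c])) = costd w d (Node r cs) + costd w d.+1 c.
Proof. by rewrite !costdE big_cat big_seq1 addrA. Qed.

End RT.

Section Lift.
Variables (T T' : finType) (f : T -> T').

Fixpoint liftT (t : rtree T) : rtree T' :=
  let: Node r cs := t in Node (f r) (map liftT cs).

Lemma vset_lift t : vset (liftT t) = f @: vset t.
Proof.
elim/rtree_ind': t => r cs IH; rewrite [liftT _]/= !vsetE imsetU imset_set1; congr (_ |: _).
rewrite big_map; elim: cs IH => [|c cs IHc] IH; rewrite ?big_nil ?big_cons ?imset0 //.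
by rewrite imsetU IH ?IHc //; [move=> c' H; apply: IH; right | left].
Qed.

Variable R : realType.
Lemma costd_lift (w : T -> R) (w' : T' -> R) c d t :
  (forall x, w' (f x) = c * w x) -> costd w' d (liftT t) = c * costd w d t.
Proof.
move=> hw; elim/rtree_ind': t d => r cs IH d; rewrite !costdE hw big_map mulrDr mulrA; congr (_ + _).
elim: cs IH => [|c0 cs IHc] IH; rewrite ?big_nil ?big_cons ?mulr0 //.
by rewrite mulrDr IH ?IHc //; [move=> c' H; apply: IH; right | left].
Qed.

Lemma nsum_lift (w : T -> R) (w' : T' -> R) c t :
  (forall x, w' (f x) = c * w x) -> nsum w' (liftT t) = c * nsum w t.
Proof.
move=> hw; elim/rtree_ind': t => r cs IH; rewrite !nsumE hw big_map mulrDr; congr (_ + _).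
elim: cs IH => [|c0 cs IHc] IH; rewrite ?big_nil ?big_cons ?mulr0 //.
by rewrite mulrDr IH ?IHc //; [move=> c' H; apply: IH; right | left].
Qed.

End Lift.

Section Perm.
Lemma perm_map_enum (A B : finType) (g : A -> B) (s : seq A) (X : {set A}) :
  injective g -> perm_eq s (enum X) -> perm_eq (map g s) (enum (g @: X)).
Proof.
move=> gi pe; apply: uniq_perm.
- by rewrite map_inj_uniq // (perm_uniq pe) enum_uniq.
- exact: enum_uniq.
move=> y; rewrite mem_enum; apply/mapP/imsetP => [[x xs ->]|[x xX ->]]; exists x => //.
  by rewrite (perm_mem pe) mem_enum in xs.
by rewrite (perm_mem pe) mem_enum.
Qed.

Lemma perm_cat_enum (A : finType) (s1 s2 : seq A) (X1 X2 : {set A}) :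
  perm_eq s1 (enum X1) -> perm_eq s2 (enum X2) -> [disjoint X1 & X2] ->
  perm_eq (s1 ++ s2) (enum (X1 :|: X2)).
Proof.
move=> p1 p2 D; apply: uniq_perm.
- rewrite cat_uniq (perm_uniq p1) (perm_uniq p2) !enum_uniq /= andbT.
  apply/hasPn => x; rewrite (perm_mem p1) (perm_mem p2) !mem_enum => x2.
  by rewrite (disjointFl D x2).
- exact: enum_uniq.
by move=> y; rewrite mem_cat (perm_mem p1) (perm_mem p2) !mem_enum inE.
Qed.

Lemma perm_enum1 (A : finType) (a : A) : perm_eq [:: a] (enum [set a]).
Proof. by rewrite enum_set1. Qed.

Lemma imsetD1 (A B : finType) (f : A -> B) (X : {set A}) r :
  injective f -> f @: (X :\ r) = (f @: X) :\ f r.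
Proof.
move=> fi; apply/setP => y; rewrite !inE; apply/imsetP/andP.
  move=> [x]; rewrite !inE => /andP [xr xX] ->; rewrite imset_f // (inj_eq fi) xr.
  by [].
move=> [yr /imsetP [x xX ey]]; exists x => //; rewrite !inE xX andbT.
by apply: contra yr; rewrite ey => /eqP ->.
Qed.
End Perm.

Lemma valid_stE (T : finType) (e : rel T) r cs : valid_st e (Node r cs) =
  perm_eq [seq vset c | c <- cs] (enum (comps e (vset (Node r cs) :\ r))) && all (valid_st e) cs.
Proof. by []. Qed.
Lemma liftTE (T T' : finType) (f : T -> T') r cs : liftT f (Node r cs) = Node (f r) (map (liftT f) cs).
Proof. by []. Qed.

Section LiftValid.
Variables (T T' : finType) (f : T -> T') (e : rel T) (e' : rel T').
Hypothesis finj : injective f.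
Hypothesis fe : forall x y, e' (f x) (f y) = e x y.

Lemma valid_lift t : valid_st e t -> valid_st e' (liftT f t).
Proof.
elim/rtree_ind': t => r cs IH; rewrite valid_stE => /andP [pe va].
rewrite liftTE valid_stE -liftTE; apply/andP; split.
  rewrite (vset_lift f (Node r cs)) -imsetD1 // (comps_embed finj fe).
  have -> : [seq vset c | c <- map (liftT f) cs] = map (fun H : {set T} => f @: H) [seq vset c | c <- cs].
    by rewrite -!map_comp; apply: eq_map => c /=; exact: vset_lift.
  exact: perm_map_enum (imset_inj finj) pe.
rewrite all_map; elim: cs IH va {pe} => //= c cs IHc IH /andP [vc vs].
rewrite IH /=; [|left|by []]; last by []. 
by apply: IHc => // c' H; apply: IH; right.
Qed.
Lemma all_valid_lift cs : all (valid_st e) cs -> all (valid_st e') (map (liftT f) cs).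
Proof. by elim: cs => //= c cs IH /andP [vc vs]; rewrite valid_lift // IH. Qed.
End LiftValid.

Section Descend.
Variable T : finType.
Implicit Types (e : rel T).

Lemma descend e r cs (Y : {set T}) y0 :
  valid_st e (Node r cs) -> Y \subset vset (Node r cs) -> r \notin Y -> y0 \in Y ->
  (forall y, y \in Y -> connect (induced e Y) y0 y) ->
  exists c, LIn c cs /\ Y \subset vset c.
Proof.
move=> va sY rY y0Y cY.
have sY' : Y \subset vset (Node r cs) :\ r.
  apply/subsetP => y yY; rewrite in_setD1 (subsetP sY) // andbT.
  by apply: contraNneq rY => <-.
have := mem_comps e (subsetP sY' y0 y0Y).
move: (va) => /andP [pe _]; rewrite -mem_enum -(perm_mem pe) => /in_map_vset [c [cin ec]].
exists c; split => //; rewrite -ec; apply/subsetP => y yY; rewrite inE (subsetP sY') //=.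
apply: (connect_map (g := id) _ (cY y yY)) => u v /= /andP [uY /andP [vY euv]].
by rewrite /induced /= (subsetP sY') // (subsetP sY') // euv.
Qed.

Variable R : realType.

Fixpoint Bnd (M : R) (s d : nat) : R :=
  if s is s'.+1 then M * d%:R + s'%:R * Bnd M s' d.+1 else 0.

Lemma Bnd_ge0 M s d : 0 <= M -> 0 <= Bnd M s d.
Proof. by move=> M0; elim: s d => //= s IH d; rewrite addr_ge0 ?mulr_ge0. Qed.

Lemma cost_bound e (w : T -> R) M s : 0 <= M -> (forall x, w x <= M) ->
  forall t d, valid_st e t -> (#|vset t| <= s)%N -> costd w d t <= Bnd M s d.
Proof.
move=> M0 wM; elim: s => [|s IH] [r cs] d va.
  by rewrite vsetE leqn0 => /eqP/cards0_eq/setP/(_ r); rewrite !inE eqxx.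
move=> cs_s; rewrite costdE /= lerD //; first by rewrite ler_wpM2r.
have rin : r \in vset (Node r cs) by rewrite vsetE setU11.
have card1 : (#|vset (Node r cs) :\ r| <= s)%N by rewrite (cardsD1 r) rin in cs_s.
have sz : (size cs <= s)%N.
  move: (va) => /andP [pe _]; rewrite -(size_map (@vset T)) (perm_size pe) -cardE.
  by apply: leq_trans card1; exact: leq_imset_card.
have chb : forall c, LIn c cs -> costd w d.+1 c <= Bnd M s d.+1.
  move=> c cin; apply: IH; first exact: valid_child va cin.
  apply: leq_trans card1; apply: subset_leq_card.
  have := child_comp va cin => /imsetP [x _ ->]; exact: comp_sub.
apply: (@le_trans _ _ ((size cs)%:R * Bnd M s d.+1)); last first.
  by rewrite ler_wpM2r ?Bnd_ge0 // ler_nat.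
elim: cs {va cs_s rin card1 sz} chb => [|c cs IHc] chb; rewrite ?big_nil ?mul0r // big_cons /=.
rewrite -natr1 mulrDl mul1r [X in _ <= X]addrC lerD //; first by apply: chb; left.
by apply: IHc => c' H; apply: chb; right.
Qed.
End Descend.

Fixpoint V (n : nat) : finType :=
  if n is n'.+1 then (V n' + (unit + V n'))%type else unit.

Fixpoint rho (n : nat) : V n :=
  match n return V n with 0 => tt | n'.+1 => inl (rho n') end.

Fixpoint E (n : nat) : rel (V n) :=
  match n return rel (V n) with
  | 0 => fun _ _ => false
  | n'.+1 => fun x y =>
    match x, y with
    | inl a, inl b => @E n' a b
    | inr (inr a), inr (inr b) => @E n' a b
    | inr (inl _), inl b => b == rho n'
    | inl a, inr (inl _) => a == rho n'
    | inr (inl _), inr (inr b) => b == rho n'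
    | inr (inr a), inr (inl _) => a == rho n'
    | _, _ => false
    end
  end.

Definition fl n (a : V n) : V n.+1 := inl a.
Definition fr n (b : V n) : V n.+1 := inr (inr b).
Definition Zv n : V n.+1 := inr (inl tt).

Lemma fl_inj n : injective (@fl n). Proof. by move=> a b []. Qed.
Lemma fr_inj n : injective (@fr n). Proof. by move=> a b []. Qed.
Lemma E_fl n a b : E (fl a) (fl b) = @E n a b. Proof. by []. Qed.
Lemma E_fr n a b : E (fr a) (fr b) = @E n a b. Proof. by []. Qed.

Lemma E_sym n : symmetric (@E n).
Proof. by elim: n => [//|n IH] [a|[[]|a]] [b|[[]|b]] //=. Qed.

Lemma E_irr n : irreflexive (@E n).
Proof. by elim: n => [//|n IH] [a|[[]|a]] //=. Qed.

Lemma induced_sym n (A : {set V n}) : symmetric (induced (@E n) A).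
Proof. by move=> x y; rewrite /induced /= E_sym andbCA. Qed.

Lemma E_conn n x y : connect (@E n) x y.
Proof.
elim: n x y => [[] []|n IH x y]; first exact: connect0.
have toZ : forall x, connect (@E n.+1) x (Zv n).
  case=> [a|[[]|b]]; first 2 last.
  - apply: (@connect_trans _ _ (fr (rho n))).
      exact: (connect_map (g := @fr n) (fun u v h => h) (IH b (rho n))).
    by apply: connect1; rewrite /= eqxx.
  - apply: (@connect_trans _ _ (fl (rho n))).
      exact: (connect_map (g := @fl n) (fun u v h => h) (IH a (rho n))).
    by apply: connect1; rewrite /= eqxx.
  exact: connect0.
apply: connect_trans (toZ x) _; rewrite (sym_connect_sym (@E_sym n.+1)); exact: toZ.
Qed.


Lemma card_V n : #|V n.+1| = (#|V n| + (1 + #|V n|))%N.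
Proof. by rewrite card_sum card_sum card_unit. Qed.

Lemma card_V_gt0 n : (0 < #|V n|)%N.
Proof. elim: n => [|n IH]; first by rewrite card_unit. by rewrite card_V addn_gt0 IH. Qed.

Lemma sum_unit (R : Type) (idx : R) (op : Monoid.com_law idx) (F : unit -> R) :
  \big[op/idx]_(u : unit) F u = F tt.
Proof. by rewrite (big_pred1 tt) // => [[]]. Qed.

Definition deg n : nat := \sum_(x : V n) \sum_(y : V n) (@E n x y : nat).

Lemma sum_eq1 n : \sum_(a : V n) (a == rho n : nat) = 1%N.
Proof. by rewrite (bigD1 (rho n)) //= eqxx big1 // => a /negbTE ->. Qed.

Lemma sumn_sum (A B : finType) (F : (A + B)%type -> nat) :
  (\sum_(x : A + B) F x = \sum_(a : A) F (inl a) + \sum_(b : B) F (inr b))%N.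
Proof. exact: big_sumType. Qed.

Lemma sumn_V n (F : V n.+1 -> nat) :
  (\sum_(x : V n.+1) F x = \sum_(a : V n) F (inl a) + (F (inr (inl tt)) + \sum_(b : V n) F (inr (inr b))))%N.
Proof. by rewrite sumn_sum sumn_sum sum_unit. Qed.

Lemma deg_rec n : deg n.+1 = (2 * deg n + 4)%N.
Proof.
rewrite /deg sumn_V.
under eq_bigr do rewrite sumn_V /= big1_eq addn0.
under [X in (_ + (_ + X))%N]eq_bigr do rewrite sumn_V /= big1_eq add0n.
rewrite sumn_V /= !big_split /= !sum_eq1; lia.
Qed.

Lemma deg_card n : deg n = (2 * (#|V n| - 1))%N.
Proof.
elim: n => [|n IH]; first by rewrite /deg big1 ?card_unit // => x _; rewrite big1.
by rewrite deg_rec IH card_V; have := card_V_gt0 n; lia.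
Qed.

Lemma card_edges (T : finType) (e : rel T) :
  #|[set p : T * T | e p.1 p.2]| = (\sum_(x : T) \sum_(y : T) (e x y : nat))%N.
Proof.
rewrite -sum1_card big_mkcond /= pair_big /=; apply: eq_bigr => [[x y]] _.
by rewrite inE /=; case: (e x y).
Qed.

Lemma E_tree n : is_tree (@E n).
Proof.
split; [exact: E_sym | exact: E_irr | exact: card_V_gt0 | exact: E_conn |].
by rewrite card_edges -/(deg n) deg_card.
Qed.

Lemma comps_setT n : comps (@E n) setT = [set setT].
Proof.
apply: (comps_conn (x0 := rho n)) => // x y _ _.
apply: (connect_map (g := id) _ (E_conn x y)) => u v /= h.
by rewrite /induced /= !in_setT h.
Qed.

Section Weights.
Variable R : realType.
Variable alpha : R.
Hypothesis ha : 2^-1 <= alpha.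
Hypothesis ha1 : alpha < 1.

Lemma a_gt0 : 0 < alpha.
Proof. by apply: lt_le_trans ha; rewrite invr_gt0. Qed.
Lemma a1_gt0 : 0 < 1 - alpha.
Proof. by rewrite subr_gt0. Qed.
Lemma a1_le_a : 1 - alpha <= alpha.
Proof. have : 2^-1 * 2 = 1 :> R by rewrite mulVf // pnatr_eq0. move: ha => h1 h2. set x := 2^-1 in h1 h2. lra. Qed.

Fixpoint W (n : nat) : V n -> R :=
  match n return V n -> R with
  | 0 => fun _ => 1
  | n'.+1 => fun x => match x with
     | inl a => alpha * @W n' a
     | inr (inl _) => 0
     | inr (inr b) => (1 - alpha) * @W n' b
     end
  end.

Lemma W_fl n a : W (@fl n a) = alpha * W a. Proof. by []. Qed.
Lemma W_fr n a : W (@fr n a) = (1 - alpha) * W a. Proof. by []. Qed.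

Lemma W_ge0 n x : 0 <= @W n x.
Proof.
have := a_gt0; have := a1_gt0.
elim: n x => [_ _ _|n IH [a|[[]|b]] h1 h2] //=; rewrite ?mulr_ge0 ?IH ?ltW //.
Qed.

Lemma W_le1 n x : @W n x <= 1.
Proof.
have := a_gt0; have := a1_gt0; have := W_ge0 x.
elim: n x => [_ _ _ _|n IH [a|[[]|b]] h0 h1 h2] //=.
  have := IH a (W_ge0 a) h1 h2; have := W_ge0 a; nra.
have := IH b (W_ge0 b) h1 h2; have := W_ge0 b; nra.
Qed.

Lemma wsum_imset (T T' : finType) (f : T -> T') (w : T -> R) (w' : T' -> R) c (A : {set T}) :
  injective f -> (forall x, w' (f x) = c * w x) -> wsum w' (f @: A) = c * wsum w A.
Proof.
move=> fi hw; rewrite /wsum big_imset /=; last by move=> x y _ _; exact: fi.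
by rewrite mulr_sumr; apply: eq_bigr => x _; rewrite hw.
Qed.

Lemma sumr_V n (F : V n.+1 -> R) :
  \sum_(x : V n.+1) F x = \sum_(a : V n) F (inl a) + (F (inr (inl tt)) + \sum_(b : V n) F (inr (inr b))).
Proof. by rewrite big_sumType big_sumType /= (big_pred1 tt) // => [[]]. Qed.

Lemma wsum_setT n : wsum (@W n) setT = 1.
Proof.
rewrite /wsum; under eq_bigl do rewrite in_setT.
elim: n => [|n IH]; first by rewrite (big_pred1 tt) // => [[]].
rewrite sumr_V /= -!mulr_sumr IH; ring.
Qed.



Lemma nsum_cat1 (T : finType) (w : T -> R) r cs c :
  nsum w (Node r (cs ++ [:: c])) = nsum w (Node r cs) + nsum w c :> R.
Proof. by rewrite !nsumE big_cat big_seq1 addrA. Qed.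

Lemma centroid_nodesE (T : finType) (e : rel T) (w : T -> R) a r cs :
  centroid_nodes e w a (Node r cs) = is_centroid e w a (vset (Node r cs)) r && all (centroid_nodes e w a) cs.
Proof. by []. Qed.

Lemma centroid_lift (T T' : finType) (f : T -> T') (e : rel T) (e' : rel T') (w : T -> R) (w' : T' -> R) c :
  injective f -> (forall x y, e' (f x) (f y) = e x y) -> (forall x, w' (f x) = c * w x) -> 0 < c ->
  forall t, centroid_nodes e w alpha t -> centroid_nodes e' w' alpha (liftT f t).
Proof.
move=> fi fe hw c0; elim/rtree_ind' => r cs IH; rewrite centroid_nodesE => /andP [ce ca].
rewrite liftTE centroid_nodesE -liftTE; apply/andP; split.
  rewrite /is_centroid vset_lift -imsetD1 // (comps_embed fi fe).
  apply/forall_inP => H' /imsetP [H Hin ->].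
  rewrite !(wsum_imset _ fi hw) mulrCA ler_pM2l //.
  by move: ce; rewrite /is_centroid => /forall_inP; apply.
rewrite all_map; elim: cs IH ca {ce} => //= c1 cs IHc IH /andP [v1 vs].
rewrite IH //=; last by left.
by apply: IHc => // c' h; apply: IH; right.
Qed.

Definition N2 n (K : seq (rtree (V n))) : rtree (V n.+1) :=
  Node (fr (rho n)) (map (liftT (@fr n)) K ++ [:: Node (Zv n) [::]]).

Fixpoint Kc (n : nat) : seq (rtree (V n)) :=
  match n return seq (rtree (V n)) with
  | 0 => [::]
  | n'.+1 => map (liftT (@fl n')) (Kc n') ++ [:: N2 (Kc n')]
  end.

Definition St n : rtree (V n) := Node (rho n) (Kc n).

Fixpoint Ct (n : nat) : rtree (V n) :=
  match n return rtree (V n) with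
  | 0 => Node tt [::]
  | n'.+1 => Node (Zv n') [:: liftT (@fl n') (Ct n'); liftT (@fr n') (Ct n')]
  end.

Lemma nsumS n : nsum (@W n) (St n) = 1.
Proof.
elim: n => [|n IH]; first by rewrite /St /= addr0.
have -> : St n.+1 = Node (fl (rho n)) (map (liftT (@fl n)) (Kc n) ++ [:: N2 (Kc n)]) by [].
rewrite nsum_cat1 -liftTE (nsum_lift (w := @W n) (c := alpha)) // /N2.
rewrite nsum_cat1 -liftTE (nsum_lift (w := @W n) (c := 1 - alpha)) // -/(St n) IH nsumE big_nil /=; ring.
Qed.

Lemma costS n : cost (@W n) (St n) = 1 + n%:R * (1 - alpha).
Proof.
rewrite /cost; elim: n => [|n IH]; first by rewrite /St /= mul0r !addr0 mulr1.
have -> : St n.+1 = Node (fl (rho n)) (map (liftT (@fl n)) (Kc n) ++ [:: N2 (Kc n)]) by [].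
rewrite costd_cat1 -liftTE (costd_lift (w := @W n) (c := alpha)) // /N2.
rewrite costd_cat1 -liftTE (costd_lift (w := @W n) (c := 1 - alpha)) // -/(St n).
rewrite (costdS _ 1 (St n)) IH nsumS costdE big_nil /=.
rewrite -natr1; ring.
Qed.

Lemma nsumC n : nsum (@W n) (Ct n) = 1.
Proof.
elim: n => [|n IH]; first by rewrite /= addr0.
rewrite nsumE !big_cons big_nil (nsum_lift (w := @W n) (c := alpha)) // (nsum_lift (w := @W n) (c := 1 - alpha)) // IH /=; ring.
Qed.

Lemma costC n : cost (@W n) (Ct n) = n%:R + 1.
Proof.
rewrite /cost; elim: n => [|n IH]; first by rewrite /= addr0 mulr1 add0r.
rewrite costdE !big_cons big_nil (costd_lift (w := @W n) (c := alpha)) // (costd_lift (w := @W n) (c := 1 - alpha)) //.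
rewrite (costdS _ 1) IH nsumC /= -natr1; ring.
Qed.

Section EqV.
Variable n : nat.
Implicit Types a b : V n.
Lemma eqV1 a : (inl a == Zv n :> V n.+1) = false. Proof. by apply/eqP. Qed.
Lemma eqV1' a : (Zv n == inl a :> V n.+1) = false. Proof. by apply/eqP. Qed.
Lemma eqV2 b : (inr (inr b) == Zv n :> V n.+1) = false. Proof. by apply/eqP. Qed.
Lemma eqV2' b : (Zv n == fr b :> V n.+1) = false. Proof. by apply/eqP. Qed.
Lemma eqV3 a b : (inl a == fr b :> V n.+1) = false. Proof. by apply/eqP. Qed.
Lemma eqV3' a b : (inr (inr b) == fl a :> V n.+1) = false. Proof. by apply/eqP. Qed.
Lemma eqV4 a b : (inr (inr a) == fr b :> V n.+1) = (a == b).
Proof. by apply/eqP/eqP => [[]|->]. Qed.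
Lemma eqV5 a b : (inl a == fl b :> V n.+1) = (a == b).
Proof. by apply/eqP/eqP => [[]|->]. Qed.
Lemma eqV6 : (inr (inl tt) == Zv n :> V n.+1) = true. Proof. by apply/eqP. Qed.
Lemma eqV7 a : (inr (inl tt) == fl a :> V n.+1) = false. Proof. by apply/eqP. Qed.
Lemma eqV8 a : (inr (inl tt) == fr a :> V n.+1) = false. Proof. by apply/eqP. Qed.
Lemma eqV9 a b : (inl a == inl b :> V n.+1) = (a == b).
Proof. by apply/eqP/eqP => [[]|->]. Qed.
End EqV.
Definition eqVs := (eqV1, eqV1', eqV2, eqV2', eqV3, eqV3', eqV4, eqV5, eqV6, eqV7, eqV8, eqV9).

Lemma mem_fr n (x : V n.+1) (H : {set V n}) :
  (x \in (@fr n) @: H) = (if x is inr (inr b) then b \in H else false).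
Proof.
case: x => [a|[[]|b]]; try by apply/imsetP => -[].
exact: mem_imset (@fr_inj n).
Qed.

Lemma mem_fl n (x : V n.+1) (H : {set V n}) :
  (x \in (@fl n) @: H) = (if x is inl a then a \in H else false).
Proof.
case: x => [a|[[]|b]]; try by apply/imsetP => -[].
exact: mem_imset (@fl_inj n).
Qed.

Lemma U_lift (T T' : finType) (f : T -> T') (cs : seq (rtree T)) :
  \bigcup_(c <- map (liftT f) cs) vset c = f @: \bigcup_(c <- cs) vset c.
Proof.
elim: cs => [|c cs IH]; first by rewrite !big_nil imset0.
by rewrite map_cons !big_cons imsetU IH vset_lift.
Qed.

Lemma U_perm (T : finType) (cs : seq (rtree T)) (X : {set {set T}}) :
  perm_eq [seq vset c | c <- cs] (enum X) -> \bigcup_(c <- cs) vset c = cover X.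
Proof. by move=> pe; rewrite -(big_map (@vset T) xpredT id) (perm_big _ pe) big_enum. Qed.

Lemma vset_leaf (T : finType) (x : T) : vset (Node x [::]) = [set x].
Proof. by rewrite /= setU0. Qed.

Lemma valid_leaf (T : finType) (e : rel T) x : valid_st e (Node x [::]).
Proof. by rewrite valid_stE vset_leaf setDv comps0 enum_set0. Qed.

Lemma comps1 (T : finType) (e : rel T) x : comps e [set x] = [set [set x]].
Proof.
apply: (comps_conn (x0 := x)); last by rewrite inE.
by move=> u v; rewrite !inE => /eqP -> /eqP ->; exact: connect0.
Qed.

Definition A2 n : {set V n.+1} := Zv n |: (@fr n) @: setT.

Lemma A2_conn n x y : x \in A2 n -> y \in A2 n -> connect (induced (@E n.+1) (A2 n)) x y.
Proof.
have toZ : forall x, x \in A2 n -> connect (induced (@E n.+1) (A2 n)) x (Zv n).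
  move=> u; rewrite !inE => /orP [/eqP -> | /imsetP [b _ ->]]; first exact: connect0.
  apply: (@connect_trans _ _ (fr (rho n))).
    apply: (connect_map (g := @fr n) _ (E_conn b (rho n))) => u' v' h.
    by rewrite /induced /A2 /= !inE !imset_f ?in_setT ?orbT /=.
  by apply: connect1; rewrite /induced /A2 /= !inE !imset_f ?in_setT ?orbT /=.
move=> xA yA; apply: connect_trans (toZ x xA) _.
rewrite (sym_connect_sym (@induced_sym n.+1 _)); exact: toZ.
Qed.

Lemma comps_A2 n : comps (@E n.+1) (A2 n) = [set A2 n].
Proof. by apply: (comps_conn (x0 := Zv n)); [exact: A2_conn | rewrite !inE eqxx]. Qed.

Lemma K_inv n : perm_eq [seq vset c | c <- Kc n] (enum (comps (@E n) (setT :\ rho n))) /\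
  all (valid_st (@E n)) (Kc n).
Proof.
elim: n => [|n [pe va]].
  split => //=; have -> : [set: V 0] :\ tt = set0.
    by apply/setP => -[]; rewrite !inE.
  by rewrite comps0 enum_set0.
have U : \bigcup_(c <- Kc n) vset c = setT :\ rho n by rewrite (U_perm pe) cover_comps.
have vN2 : vset (N2 (Kc n)) = A2 n.
  rewrite vsetE big_cat big_seq1 U_lift U vset_leaf.
  apply/setP => -[a|[[]|b]]; rewrite /A2 !inE !mem_fr ?eqVs ?orbT //=.
  by rewrite !inE orbF; case: (b == rho n).
have ZnF : forall H : {set V n}, Zv n \notin (@fr n) @: H.
  by move=> H; apply/imsetP => -[].
have vaN2 : valid_st (@E n.+1) (N2 (Kc n)).
  rewrite valid_stE vN2; apply/andP; split; last first.
    by rewrite all_cat all_seq1 valid_leaf andbT (all_valid_lift (@fr_inj n) (@E_fr n)).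
  have -> : A2 n :\ fr (rho n) = (@fr n) @: (setT :\ rho n) :|: [set Zv n].
    apply/setP => -[a|[[]|b]]; rewrite /A2 !in_setD1 !in_setU1 ?in_setU !mem_fr ?in_set1 ?eqVs ?in_setD1 ?in_setT //=.
    by rewrite orbF.
  rewrite comps_split; first last.
  - by move=> x y; rewrite inE => /eqP -> /imsetP [b]; rewrite !inE andbT => nb ->; exact: negbTE nb.
  - by move=> x y /imsetP [b]; rewrite !inE andbT => nb -> /eqP ->; exact: negbTE nb.
  rewrite (comps_embed (@fr_inj n) (@E_fr n)) comps1 map_cat map_cons.
  have -> : [seq vset c | c <- map (liftT (@fr n)) (Kc n)] =
     map (fun H : {set V n} => (@fr n) @: H) [seq vset c | c <- Kc n].
    by rewrite -!map_comp; apply: eq_map => c /=; exact: vset_lift.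
  apply: perm_cat_enum; first exact: perm_map_enum (imset_inj (@fr_inj n)) pe.
    by rewrite vset_leaf; exact: perm_enum1.
  rewrite disjoint_sym disjoints1; apply/imsetP => -[H _ /setP /(_ (Zv n))].
  by rewrite inE eqxx (negbTE (ZnF H)).
split; last first.
  by rewrite /Kc -/Kc all_cat all_seq1 vaN2 andbT (all_valid_lift (@fl_inj n) (@E_fl n)).
have -> : [set: V n.+1] :\ rho n.+1 = (@fl n) @: (setT :\ rho n) :|: A2 n.
  apply/setP => -[a|[[]|b]]; rewrite /A2 !in_setD1 ?in_setU1 ?in_setU !mem_fl ?mem_fr ?in_set1 ?eqVs ?in_setD1 ?in_setT //=.
  by rewrite orbF.
rewrite comps_split; first last.
- move=> x y; rewrite /A2 in_setU1 => /orP [/eqP -> | /imsetP [b _ ->]] /imsetP [a]; rewrite !inE andbT => na -> //.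
  exact: negbTE na.
- move=> x y /imsetP [a]; rewrite in_setD1 in_setT andbT => na ->; rewrite /A2 in_setU1 => /orP [/eqP -> | /imsetP [b _ ->]] //.
  exact: negbTE na.
have -> : Kc n.+1 = map (liftT (@fl n)) (Kc n) ++ [:: N2 (Kc n)] by [].
rewrite (comps_embed (@fl_inj n) (@E_fl n)) comps_A2 map_cat map_cons.
have -> : [seq vset c | c <- map (liftT (@fl n)) (Kc n)] =
   map (fun H : {set V n} => (@fl n) @: H) [seq vset c | c <- Kc n].
  by rewrite -!map_comp; apply: eq_map => c /=; exact: vset_lift.
apply: perm_cat_enum; first exact: perm_map_enum (imset_inj (@fl_inj n)) pe.
  by rewrite vN2; exact: perm_enum1.
rewrite disjoint_sym disjoints1; apply/imsetP => -[H _ /setP /(_ (Zv n))].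
by rewrite !inE eqxx /=; move/esym/imsetP => -[].
Qed.

Lemma St_search n : search_tree (@E n) (St n).
Proof.
have [pe va] := K_inv n.
have vS : vset (St n) = setT.
  by rewrite /St (vset_perm _ pe) cover_comps setD1K.
by rewrite /search_tree vS eqxx andbT /St valid_stE -/(St n) vS pe.
Qed.

Lemma setT_Z n : [set: V n.+1] :\ Zv n = (@fl n) @: setT :|: (@fr n) @: setT.
Proof.
by apply/setP => -[a|[[]|b]]; rewrite in_setD1 ?in_setU !mem_fl ?mem_fr ?eqVs ?in_setT.
Qed.

Lemma comps_top n : comps (@E n.+1) ([set: V n.+1] :\ Zv n) = [set (@fl n) @: setT] :|: [set (@fr n) @: setT].
Proof.
rewrite setT_Z comps_split; first last.
- by move=> x y /imsetP [b _ ->] /imsetP [a _ ->].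
- by move=> x y /imsetP [a _ ->] /imsetP [b _ ->].
by rewrite (comps_embed (@fl_inj n) (@E_fl n)) (comps_embed (@fr_inj n) (@E_fr n)) comps_setT !imset_set1.
Qed.

Lemma Ct_inv n : vset (Ct n) = setT /\ valid_st (@E n) (Ct n) /\ centroid_nodes (@E n) (@W n) alpha (Ct n).
Proof.
elim: n => [|n [vC [vaC cC]]].
  have vC : vset (Ct 0) = setT by apply/setP => -[]; rewrite vset_leaf !inE.
  have e0 : vset (Ct 0) :\ tt = set0 by rewrite vC; apply/setP => -[]; rewrite !inE.
  split => //; split; first by rewrite valid_stE e0 comps0 enum_set0.
  rewrite centroid_nodesE /= andbT /is_centroid e0 comps0.
  by apply/forall_inP => H; rewrite inE.
have -> : Ct n.+1 = Node (Zv n) [:: liftT (@fl n) (Ct n); liftT (@fr n) (Ct n)] by [].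
have vC' : vset (Node (Zv n) [:: liftT (@fl n) (Ct n); liftT (@fr n) (Ct n)]) = setT.
  rewrite vsetE !big_cons big_nil setU0 !vset_lift vC -setT_Z setD1K //.
split => //; split.
  rewrite valid_stE vC' comps_top /= andbT !(valid_lift (@fl_inj n) (@E_fl n)) //.
  rewrite !(valid_lift (@fr_inj n) (@E_fr n)) // andbT !vset_lift vC.
  rewrite andbT; apply: (@perm_cat_enum _ [:: _] [:: _]); try exact: perm_enum1.
  rewrite disjoints1 inE; apply/eqP => /setP /(_ (fl (rho n))).
  by rewrite mem_fl mem_fr /= in_setT.
rewrite centroid_nodesE [all _ _]/=.
rewrite (centroid_lift (@fl_inj n) (@E_fl n) (@W_fl n) a_gt0 cC).
rewrite (centroid_lift (@fr_inj n) (@E_fr n) (@W_fr n) a1_gt0 cC) andbT.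
rewrite /is_centroid vC' comps_top wsum_setT ?andbT; apply/forall_inP => H.
rewrite !inE => /orP [] /eqP ->.
  by rewrite (wsum_imset _ (@fl_inj n) (@W_fl n)) wsum_setT mulr1.
by rewrite (wsum_imset _ (@fr_inj n) (@W_fr n)) wsum_setT !mulr1 a1_le_a.
Qed.

Definition u k n (f : V k -> V n) : V n -> R := fun y => \sum_(x | f x == y) @W k x.

Lemma u_ge0 k n (f : V k -> V n) y : 0 <= u f y.
Proof. by apply: sumr_ge0 => x _; exact: W_ge0. Qed.

Lemma u_step k n (f : V k.+1 -> V n) y :
  u f y = alpha * u (f \o @fl k) y + (1 - alpha) * u (f \o @fr k) y.
Proof.
rewrite /u big_mkcond sumr_V /=.
have -> : (if f (inr (inl tt)) == y then 0 else 0) = 0 :> R by case: ifP.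
rewrite add0r !mulr_sumr [X in _ = X + _]big_mkcond [X in _ = _ + X]big_mkcond /=.
congr (_ + _); apply: eq_bigr => x _; case: ifP => //; rewrite mulr0.
Qed.

Lemma u_id n y : u (@id (V n)) y = W y.
Proof. by rewrite /u big_pred1_eq. Qed.

Lemma u_base n (f : V 0 -> V n) : u f (f tt) = 1.
Proof. by rewrite /u big_mkcond sum_unit eqxx. Qed.

Lemma img_conn k n (f : V k -> V n) : (forall a b, @E k a b -> E (f a) (f b)) ->
  forall y, y \in f @: setT -> connect (induced (@E n) (f @: setT)) (f (rho k)) y.
Proof.
move=> fe y /imsetP [x _ ->].
apply: (connect_map (g := f) _ (E_conn _ _)) => a b h.
by rewrite /induced /= !imset_f ?in_setT //= fe.
Qed.

Lemma claim k : forall n (f : V k -> V n), injective f -> (forall a b, @E k a b -> E (f a) (f b)) ->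
  forall t d, valid_st (@E n) t -> f @: setT \subset vset t ->
  d%:R + k%:R * (1 - alpha) <= costd (u f) d t.
Proof.
have ha0 := a_gt0; have ha10 := a1_gt0; have hle := a1_le_a.
elim: k => [|k IHk] n f fi fe t; elim/rtree_ind': t => r cs IHt d va sub.
- case: (boolP (r \in f @: setT)) => [rin|rnot].
    have -> : r = f tt by move: rin => /imsetP [[] _ ->].
    rewrite costdE u_base mul1r mul0r addr0 -[X in X <= _]addr0 lerD //.
    by apply: sumr_ge0 => c _; apply: costd_ge0 => y; exact: u_ge0.
  have [c [cin sc]] := descend va sub rnot (imset_f f (in_setT (rho 0))) (img_conn fe).
  apply: (le_trans _ (costd_child d r (u_ge0 f) cin)).
  apply: (le_trans _ (IHt c cin d.+1 (valid_child va cin) sc)).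
  by rewrite -natr1 !mul0r !addr0 lerDl.
case: (boolP (r \in f @: setT)) => [rin|rnot]; last first.
  have [c [cin sc]] := descend va sub rnot (imset_f f (in_setT (rho k.+1))) (img_conn fe).
  apply: (le_trans _ (costd_child d r (u_ge0 f) cin)).
  apply: (le_trans _ (IHt c cin d.+1 (valid_child va cin) sc)).
  by rewrite -[(d.+1)%:R]natr1 lerD2r lerDl.
set f1 := f \o @fl k; set f2 := f \o @fr k.
have fi1 : injective f1 by move=> a b /fi [].
have fi2 : injective f2 by move=> a b /fi [].
have fe1 : forall a b, @E k a b -> E (f1 a) (f1 b) by move=> a b h; apply: fe.
have fe2 : forall a b, @E k a b -> E (f2 a) (f2 b) by move=> a b h; apply: fe.
have sub1 : f1 @: setT \subset vset (Node r cs).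
  apply: subset_trans sub; apply/subsetP => y /imsetP [x _ ->]; exact: imset_f.
have sub2 : f2 @: setT \subset vset (Node r cs).
  apply: subset_trans sub; apply/subsetP => y /imsetP [x _ ->]; exact: imset_f.
have -> : u f = (fun y => alpha * u f1 y + (1 - alpha) * u f2 y).
  by apply: boolp.funext => y; exact: u_step.
rewrite costd_lin.
have h1 := IHk n f1 fi1 fe1 _ d va sub1.
have h2 := IHk n f2 fi2 fe2 _ d va sub2.
case: (boolP (r \in f2 @: setT)) => r2.
  have r1 : r \notin f1 @: setT.
    apply/imsetP => -[a _ ra]; move: r2 => /imsetP [b _]; rewrite ra => /fi.
    by [].
  have [c [cin sc]] := descend va sub1 r1 (imset_f f1 (in_setT (rho k))) (img_conn fe1).
  have h1' := le_trans (IHk n f1 fi1 fe1 c d.+1 (valid_child va cin) sc)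
     (costd_child d r (u_ge0 f1) cin).
  move: h1' h2; rewrite -natr1 -[(k.+1)%:R]natr1.
  set A1 := costd _ _ _; set A2 := costd _ _ _; nra.
have [c [cin sc]] := descend va sub2 r2 (imset_f f2 (in_setT (rho k))) (img_conn fe2).
have h2' := le_trans (IHk n f2 fi2 fe2 c d.+1 (valid_child va cin) sc)
   (costd_child d r (u_ge0 f2) cin).
move: h1 h2'; rewrite -natr1 -[(k.+1)%:R]natr1.
set A1 := costd _ _ _; set A2 := costd _ _ _; nra.
Qed.

Lemma opt_lb n t : search_tree (@E n) t -> 1 + n%:R * (1 - alpha) <= cost (@W n) t.
Proof.
move=> /andP [va /eqP vt].
have -> : @W n = u (@id (V n)) by apply: boolp.funext => y; rewrite u_id.
have := @claim n n id (@inj_id _) (fun a b h => h) t 1 va.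
by rewrite vt subsetT => /(_ isT).
Qed.

Lemma opt_eq n : OPT (@E n) (@W n) = 1 + n%:R * (1 - alpha).
Proof.
apply/eqP; rewrite eq_le; apply/andP; split.
  rewrite -(costS n); apply: ge_inf; last by exists (St n); split => //; exact: St_search.
  by exists (1 + n%:R * (1 - alpha)) => c [t [st ->]]; exact: opt_lb.
apply: lb_le_inf; first by exists (cost (@W n) (St n)); exists (St n); split => //; exact: St_search.
by move=> c [t [st ->]]; exact: opt_lb.
Qed.

Lemma cent_ge n : n%:R + 1 <= cent (@E n) (@W n) alpha.
Proof.
have [vC [vaC cC]] := Ct_inv n.
have ctC : centroid_tree (@E n) (@W n) alpha (Ct n).
  by rewrite /centroid_tree /search_tree vaC vC eqxx cC.
rewrite /cent asboolT; last by exists (Ct n).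
rewrite -(costC n); apply: ub_le_sup; last by exists (Ct n).
exists (Bnd 1 #|V n| 1) => c [t [/andP [/andP [va /eqP vt] _] ->]].
apply: cost_bound => //; first exact: W_le1.
  exact: va. exact: max_card.
Qed.

End Weights.

Theorem theorem8 (R : realType) (alpha : R) :
  2^-1 <= alpha -> alpha < 1 ->
  exists (T : nat -> finType) (e : forall n, rel (T n)) (w : forall n, T n -> R),
    [/\ (forall n, is_tree (e n)),
        (forall n (x : T n), 0 <= w n x),
        (forall n, wsum (w n) [set: T n] = 1),
        (forall M : R, exists N : nat, forall n : nat, (N <= n)%N ->
            M < OPT (e n) (w n)) &
        (forall n, cent (e n) (w n) alpha >=
            (1 - alpha)^-1 * OPT (e n) (w n) - alpha / (1 - alpha))].
Proof.
move=> ha ha1; exists V, (fun n => @E n), (fun n => @W R alpha n); split.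
- by move=> n; exact: E_tree.
- by move=> n x; exact: W_ge0.
- by move=> n; exact: wsum_setT.
- move=> M; have h1 := a1_gt0 ha1.
  exists (Num.Def.archi_bound (`|M| / (1 - alpha))) => n hn.
  rewrite opt_eq //.
  have hb := @archi_boundP _ (`|M| / (1 - alpha)) (divr_ge0 (normr_ge0 _) (ltW h1)).
  have hn' : (Num.Def.archi_bound (`|M| / (1 - alpha)))%:R <= n%:R :> R by rewrite ler_nat.
  have : `|M| < n%:R * (1 - alpha).
    by rewrite -ltr_pdivrMr //; exact: lt_le_trans hb hn'.
  have := ler_norm M; lra.
- move=> n; rewrite opt_eq //; apply: le_trans (cent_ge ha ha1 n).
  have h1 := a1_gt0 ha1.
  have -> : (1 - alpha)^-1 * (1 + n%:R * (1 - alpha)) - alpha / (1 - alpha) = n%:R + 1.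
    by field; rewrite gt_eqF.
  by [].
Qed.
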